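(* Let $L$ be a multiplicative lattice, $n\ge1$, and $q$ a proper element of $L$. (1) If for all $a,b\in L$ with $a^nb\le q\le a\wedge b$ one has $a^n\le q$ or $a^{n-1}b\le q$, then $q$ is a strongly quasi $n$-absorbing element of $L$. (2) If for all $a_1,a_2,\dots,a_{n+1}\in L$ with $a_1a_2\cdots a_{n+1}\le q\le a_1\wedge a_2\wedge\cdots\wedge a_{n+1}$ one has $a_1\cdots a_{i-1}a_{i+1}\cdots a_{n+1}\le q$ for some $1\le i\le n+1$, then $q$ is a strongly quasi $n$-absorbing element of $L$.
   Context: A multiplicative lattice is a complete lattice $L$ with least element $0$ and compact greatest element $1$, equipped with a commutative, associative product that distributes over arbitrary joins and has $1$ as multiplicative identity. $a^0=1$. A proper element $q$ ($q<1$) is strongly quasi $n$-absorbing if whenever $a,b\in L$ (not necessarily compact) satisfy $a^nb\le q$, then $a^n\le q$ or $a^{n-1}b\le q$. *)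

(* Defs.v *)
From Stdlib Require Import List Arith.
Import ListNotations.

Record MultLattice := {
  car :> Type;
  le : car -> car -> Prop;
  sup : (car -> Prop) -> car;
  mul : car -> car -> car;
  zero : car;
  one : car;
  le_refl : forall x, le x x;
  le_trans : forall x y z, le x y -> le y z -> le x z;
  le_antisym : forall x y, le x y -> le y x -> x = y;
  sup_ub : forall (S : car -> Prop) x, S x -> le x (sup S);
  sup_least : forall (S : car -> Prop) y, (forall x, S x -> le x y) -> le (sup S) y;
  zero_least : forall x, le zero x;
  one_greatest : forall x, le x one;
  one_compact : forall S : car -> Prop, le one (sup S) ->
     exists l : list car, Forall S l /\ le one (sup (fun x => In x l));
  mulC : forall a b, mul a b = mul b a;
  mulA : forall a b c, mul a (mul b c) = mul (mul a b) c;
  mul1 : forall a, mul one a = a;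
  mul_sup : forall a (S : car -> Prop),
     mul a (sup S) = sup (fun y => exists s, S s /\ y = mul a s)
}.

Arguments le {L} : rename.
Arguments sup {L} : rename.
Arguments mul {L} : rename.
Arguments one {L} : rename.
Arguments zero {L} : rename.

Section Ops.
Variable L : MultLattice.

Definition meet (a b : L) : L := sup (fun x => le x a /\ le x b).

Definition meet_fam (a : nat -> L) (n : nat) : L :=
  sup (fun x => forall j, j <= n -> le x (a j)).

Fixpoint pow (a : L) (k : nat) : L :=
  match k with 0 => one | S k' => mul a (pow a k') end.

Fixpoint prodn (a : nat -> L) (k : nat) : L :=
  match k with 0 => one | S k' => mul (prodn a k') (a k') end.

Definition prod_except (a : nat -> L) (k i : nat) : L :=
  prodn (fun j => if Nat.eqb j i then one else a j) k.

Definition proper (q : L) : Prop := le q one /\ q <> one.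

Definition strongly_quasi_n_absorbing (n : nat) (q : L) : Prop :=
  proper q /\
  forall a b : L, le (mul (pow a n) b) q ->
     le (pow a n) q \/ le (mul (pow a (n - 1)) b) q.
End Ops.

Arguments meet {L}. Arguments meet_fam {L}. Arguments pow {L}.
Arguments prodn {L}. Arguments prod_except {L}. Arguments proper {L}.
Arguments strongly_quasi_n_absorbing {L}.

(* Main.v *)
Require Import Defs.
From Stdlib Require Import List Arith Lia.

Definition join {L : MultLattice} (a b : L) : L := sup (fun w => w = a \/ w = b).

Lemma join_l (L : MultLattice) (a b : L) : le a (join a b).
Proof. apply sup_ub; auto. Qed.
Lemma join_r (L : MultLattice) (a b : L) : le b (join a b).
Proof. apply sup_ub; auto. Qed.
Lemma join_le (L : MultLattice) (a b c : L) : le a c -> le b c -> le (join a b) c.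
Proof. intros H1 H2. apply sup_least. intros x [->| ->]; auto. Qed.

Lemma mul_mono_r (L : MultLattice) (x y z : L) : le y z -> le (mul x y) (mul x z).
Proof.
  intros H. assert (E : z = join y z).
  { apply le_antisym. apply join_r. apply join_le; auto. apply le_refl. }
  rewrite E. unfold join. rewrite mul_sup. apply sup_ub. exists y. auto.
Qed.
Lemma mul_mono_l (L : MultLattice) (x y z : L) : le y z -> le (mul y x) (mul z x).
Proof. intros H. rewrite (mulC _ y), (mulC _ z). now apply mul_mono_r. Qed.

Lemma mul_le_q (L : MultLattice) (x q : L) : le q one -> le (mul x q) q.
Proof.
  intros H. rewrite mulC. eapply le_trans. apply mul_mono_r. apply one_greatest.
  rewrite mulC, mul1. apply le_refl.
Qed.

Lemma mul_join (L : MultLattice) (x a q : L) : le q one ->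
  le (mul x (join a q)) (join (mul x a) q).
Proof.
  intros Hq. unfold join at 1. rewrite mul_sup. apply sup_least.
  intros y [s [[-> | ->] ->]]. apply join_l.
  eapply le_trans. apply mul_le_q; auto. apply join_r.
Qed.

Lemma join_mono (L : MultLattice) (a b q : L) : le a b -> le (join a q) (join b q).
Proof. intros H. apply join_le. eapply le_trans; eauto. apply join_l. apply join_r. Qed.

Lemma pow_join (L : MultLattice) (a q : L) (k : nat) : le q one ->
  le (pow (join a q) k) (join (pow a k) q).
Proof.
  intros Hq. induction k; simpl. apply join_l.
  eapply le_trans. apply mul_mono_r. exact IHk.
  eapply le_trans. apply mul_join; auto.
  apply join_le; [|apply join_r].
  rewrite mulC. eapply le_trans. apply mul_join; auto.
  apply join_le; [|apply join_r]. rewrite mulC. apply join_l.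
Qed.

Lemma pow_mono (L : MultLattice) (a b : L) (k : nat) : le a b -> le (pow a k) (pow b k).
Proof.
  intros H. induction k; simpl. apply le_refl.
  eapply le_trans. apply mul_mono_l. exact H. apply mul_mono_r. auto.
Qed.

Lemma key (L : MultLattice) (n : nat) (q a b : L) : le q one ->
  le (mul (pow a n) b) q ->
  le (mul (pow (join a q) n) (join b q)) q.
Proof.
  intros Hq H. eapply le_trans. apply mul_mono_l. apply pow_join; auto.
  rewrite mulC. eapply le_trans. apply mul_join; auto.
  apply join_le; [|apply le_refl]. rewrite mulC.
  eapply le_trans. apply mul_join; auto. apply join_le; auto. apply le_refl.
Qed.

Lemma transfer (L : MultLattice) (n : nat) (q a b : L) :
  (le (pow (join a q) n) q \/ le (mul (pow (join a q) (n - 1)) (join b q)) q) ->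
  le (pow a n) q \/ le (mul (pow a (n - 1)) b) q.
Proof.
  intros [H|H]; [left|right]; eapply le_trans; try exact H.
  apply pow_mono, join_l.
  eapply le_trans. apply mul_mono_l. apply pow_mono, join_l. apply mul_mono_r, join_l.
Qed.

Lemma prodn_const (L : MultLattice) (f : nat -> L) (x : L) k :
  (forall j, j < k -> f j = x) -> prodn f k = pow x k.
Proof.
  induction k; intros H; simpl; auto.
  rewrite IHk by (intros; apply H; lia). rewrite H by lia. apply mulC.
Qed.

Lemma prodn_except (L : MultLattice) (f : nat -> L) (x : L) i k :
  (forall j, j < k -> j <> i -> f j = x) -> f i = one -> i < k ->
  prodn f k = pow x (k - 1).
Proof.
  induction k; intros H Hi Hik; [lia|]. simpl.
  destruct (Nat.eq_dec i k) as [->|Hne].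
  - rewrite Hi. rewrite (prodn_const _ _ x) by (intros; apply H; lia).
    rewrite mulC, mul1. f_equal; lia.
  - rewrite IHk by (auto; lia). rewrite H by lia. rewrite mulC.
    destruct k; [lia|]. simpl. f_equal. f_equal. lia.
Qed.

Theorem mainTheorem15 (L : MultLattice) (n : nat) (q : L) :
  1 <= n -> proper q ->
  ((forall a b : L, le (mul (pow a n) b) q -> le q (meet a b) ->
       le (pow a n) q \/ le (mul (pow a (n - 1)) b) q) ->
     strongly_quasi_n_absorbing n q) /\
  ((forall a : nat -> L,
       le (prodn a (n + 1)) q -> le q (meet_fam a n) ->
       exists i, i <= n /\ le (prod_except a (n + 1) i) q) ->
     strongly_quasi_n_absorbing n q).
Proof.
  intros Hn Hp. pose proof (proj1 Hp) as Hq. split; intros Hyp; split; auto;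
  intros a b H; apply transfer; pose proof (key L n q a b Hq H) as K.
  - apply Hyp; auto. apply sup_ub. split; apply join_r.
  - set (a' := join a q). set (b' := join b q).
    set (g := fun j => if Nat.eqb j n then b' else a').
    destruct (Hyp g) as [i [Hi Hle]].
    + replace (n + 1) with (S n) by lia. simpl.
      rewrite (prodn_const _ _ a').
      * unfold g. rewrite Nat.eqb_refl. exact K.
      * intros j Hj. unfold g. destruct (Nat.eqb_spec j n); auto; lia.
    + apply sup_ub. intros j Hj. unfold g. destruct (Nat.eqb j n); apply join_r.
    + unfold prod_except in Hle. replace (n + 1) with (S n) in Hle by lia.
      simpl in Hle. destruct (Nat.eq_dec i n) as [->|Hne].
      * left. rewrite Nat.eqb_refl, mulC, mul1 in Hle.
        rewrite (prodn_const _ _ a') in Hle; auto.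
        intros j Hj. unfold g. destruct (Nat.eqb_spec j n); [lia|].
        destruct (Nat.eqb_spec j n); [lia|]; auto.
      * right. assert (E : Nat.eqb n i = false) by (apply Nat.eqb_neq; auto).
        rewrite E in Hle. unfold g at 2 in Hle. rewrite Nat.eqb_refl in Hle.
        rewrite (prodn_except _ _ a' i) in Hle.
        -- replace (n - 1) with (n - 1) by lia. exact Hle.
        -- intros j Hj Hji. destruct (Nat.eqb_spec j i); [lia|].
           unfold g. destruct (Nat.eqb_spec j n); [lia|auto].
        -- rewrite Nat.eqb_refl. auto.
        -- lia.
Qed.
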